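(* Let $\langle S,L,\tau,\ell\rangle$ be a labelled Markov chain and let $s,t\in S$ with $s\simeq t$. Then the function $\delta_{\_}(s,t):(S\to\mathcal{D}(S))\to[0,1]$, $\sigma\mapsto\delta_\sigma(s,t)$, is continuous at $\tau$; that is, for every sequence $(\tau_n)_n$ of transition functions $\tau_n:S\to\mathcal{D}(S)$ converging to $\tau$ we have $\lim_n \delta_{\tau_n}(s,t)=0$.
   Context: A labelled Markov chain is a tuple $\langle S,L,\tau,\ell\rangle$ with $S$ a finite set of states, $L$ a finite set of labels, $\tau:S\to\mathcal{D}(S)$ a transition function ($\mathcal{D}(X)$ = probability distributions on $X$) and $\ell:S\to L$ a labelling; assume $|\ell(S)|\ge 2$. For $\mu,\nu\in\mathcal{D}(X)$, the set of couplings is $\Omega(\mu,\nu)=\{\omega\in\mathcal{D}(X\times X)\mid \forall x:\ \sum_y\omega(x,y)=\mu(x),\ \sum_y\omega(y,x)=\nu(x)\}$. Transition functions $S\to\mathcal{D}(S)$ are equipped with the metric $d_F(\sigma,\tau)=\max_{s\in S}\max_{x\in S}|\sigma(s)(x)-\tau(s)(x)|$, and convergence refers to this metric. The probabilistic bisimilarity distance $\delta_\tau:S\times S\to[0,1]$ is the least fixed point of $\Delta_\tau$, where $\Delta_\tau(d)(s,t)=1$ if $\ell(s)\ne\ell(t)$ and $\Delta_\tau(d)(s,t)=\inf_{\omega\in\Omega(\tau(s),\tau(t))}\sum_{u,v}\omega(u,v)d(u,v)$ otherwise. Let $S^2_\Delta=\{(s,s)\mid s\in S\}$, $S^2_1=\{(s,t)\mid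 \ell(s)\ne\ell(t)\}$, $S^2_{0?}=(S\times S)\setminus(S^2_\Delta\cup S^2_1)$. A policy for $\tau$ is a map $P:S\times S\to\mathcal{D}(S\times S)$ such that $P(s,t)\in\Omega(\tau(s),\tau(t))$ for all $(s,t)\in S^2_\Delta\cup S^2_{0?}$, and $P(s,t)$ is the point mass on $(s,t)$ for $(s,t)\in S^2_1$; $\mathcal{P}_\tau$ denotes the set of policies, and each $P$ induces a Markov chain $\langle S\times S,P\rangle$. Robust bisimilarity: $s\simeq t$ iff there is $P\in\mathcal{P}_\tau$ such that $(s,t)$ reaches $S^2_\Delta$ with probability $1$ in $\langle S\times S,P\rangle$. *)

(* Defs.v *)
From HB Require Import structures.
From mathcomp Require Import all_boot all_order all_algebra.
From mathcomp Require Import all_classical all_reals all_analysis.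
Set Implicit Arguments. Unset Strict Implicit. Unset Printing Implicit Defensive.
Import Order.TTheory GRing.Theory Num.Theory numFieldNormedType.Exports.
Local Open Scope ring_scope.
Local Open Scope classical_set_scope.

Section LMC.
Variable R : realType.

Definition is_distr (X : finType) (mu : X -> R) : Prop :=
  (forall x, 0 <= mu x) /\ \sum_(x : X) mu x = 1.

Variable S : finType.

Definition is_trans (tau : S -> S -> R) : Prop := forall s, is_distr (tau s).

Definition coupling (mu nu : S -> R) (omega : S * S -> R) : Prop :=
  is_distr omega /\
  (forall x, \sum_(y : S) omega (x, y) = mu x) /\
  (forall x, \sum_(y : S) omega (y, x) = nu x).

Definition dF (sigma tau : S -> S -> R) : R :=
  \big[Num.max/0]_(s : S) \big[Num.max/0]_(x : S) `|sigma s x - tau s x|.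

Variable L : eqType.
Variable ell : S -> L.

Definition Delta (tau : S -> S -> R) (d : S -> S -> R) : S -> S -> R :=
  fun s t =>
    if ell s != ell t then 1
    else inf [set r | exists omega, coupling (tau s) (tau t) omega /\
                 r = \sum_(u : S) \sum_(v : S) omega (u, v) * d u v].

Definition unit_valued (d : S -> S -> R) : Prop :=
  forall s t, 0 <= d s t <= 1.

(* d is the least fixed point of Delta_tau on functions S x S -> [0,1],
   ordered pointwise; i.e. d = delta_tau *)
Definition is_bisim_dist (tau : S -> S -> R) (d : S -> S -> R) : Prop :=
  [/\ unit_valued d, Delta tau d = d &
      forall d', unit_valued d' -> Delta tau d' = d' ->
                 forall s t, d s t <= d' s t].

Definition S2_Delta : set (S * S) := [set p | p.1 = p.2].
Definition S2_1 : set (S * S) := [set p | ell p.1 != ell p.2].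
Definition S2_0q : set (S * S) := ~` (S2_Delta `|` S2_1).

Definition is_policy (tau : S -> S -> R) (P : S * S -> S * S -> R) : Prop :=
  (forall p, (S2_Delta `|` S2_0q) p -> coupling (tau p.1) (tau p.2) (P p)) /\
  (forall p, S2_1 p -> forall q, P p q = (if q == p then 1 else 0)).

Fixpoint reach_within (P : S * S -> S * S -> R) (T : set (S * S)) (n : nat)
  (x : S * S) : R :=
  match n with
  | 0%N => if `[< T x >] then 1 else 0
  | n'.+1 => if `[< T x >] then 1
             else \sum_(y : S * S) P x y * reach_within P T n' y
  end.

(* x reaches T with probability 1: the probability of the event
   "eventually in T", i.e. the limit of the within-n-steps probabilities,
   equals 1 *)
Definition reaches_as (P : S * S -> S * S -> R) (T : set (S * S))
  (x : S * S) : Prop :=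
  (fun n : nat => reach_within P T n x) @ \oo --> (1 : R).

Definition robust_bisim (tau : S -> S -> R) (s t : S) : Prop :=
  exists P, is_policy tau P /\ reaches_as P S2_Delta (s, t).

End LMC.

(* Main.v *)
Require Import Defs.
From HB Require Import structures.
From mathcomp Require Import all_boot all_order all_algebra.
From mathcomp Require Import all_classical all_reals all_analysis.
From mathcomp Require Import ring lra.
Import Order.TTheory GRing.Theory Num.Theory numFieldNormedType.Exports.
Set Implicit Arguments. Unset Strict Implicit. Unset Printing Implicit Defensive.
Local Open Scope ring_scope.
Local Open Scope classical_set_scope.

Section Aux.
Variable R : realType.
Variable S : finType.
Variable L : eqType.
Variable ell : S -> L.

Lemma sum_pair (F : S * S -> R) : \sum_q F q = \sum_u \sum_v F (u, v).
Proof. by rewrite pair_big; apply: eq_bigr => -[]. Qed.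

Lemma le_bigmax0 (I : eqType) (r : seq I) (F : I -> R) i :
  i \in r -> F i <= \big[Num.max/0]_(j <- r) F j.
Proof.
elim: r => // a r IH; rewrite inE big_cons => /orP[/eqP->|/IH h].
  by rewrite le_max lexx.
by rewrite le_max h orbT.
Qed.

Lemma dF_ge (sg tu : S -> S -> R) u x : `|sg u x - tu u x| <= dF sg tu.
Proof.
rewrite /dF.
apply: (le_trans (le_bigmax0 (fun x => `|sg u x - tu u x|) (mem_index_enum x))).
exact: (le_bigmax0 (fun u => \big[Num.max/0]_(x : S) `|sg u x - tu u x|) (mem_index_enum u)).
Qed.

Lemma prod_coupling (mu nu : S -> R) : is_distr mu -> is_distr nu ->
  coupling mu nu (fun p => mu p.1 * nu p.2).
Proof.
move=> [m0 m1] [n0 n1]; split; [split|split].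
- by move=> p; rewrite mulr_ge0.
- rewrite sum_pair /=; under eq_bigr do rewrite -big_distrr /= n1 mulr1.
  by [].
- by move=> x /=; rewrite -big_distrr /= n1 mulr1.
- by move=> x /=; rewrite -big_distrl /= m1 mul1r.
Qed.

Definition DSet (tau : S -> S -> R) (d : S -> S -> R) u v :=
  [set r | exists omega, coupling (tau u) (tau v) omega /\
                 r = \sum_(x : S) \sum_(y : S) omega (x, y) * d x y].

Lemma coupling_ge0 (mu nu : S -> R) (omega : S * S -> R) : coupling mu nu omega -> forall p, 0 <= omega p.
Proof. by case=> [[]]. Qed.

Lemma coupling_sum1 (mu nu : S -> R) (omega : S * S -> R) : coupling mu nu omega ->
  \sum_x \sum_y omega (x, y) = 1.
Proof. by case=> [[_ h]] _; rewrite -sum_pair. Qed.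

Lemma DSet_lb (tau d : S -> S -> R) (u v : S) : unit_valued d -> lbound (DSet tau d u v) 0.
Proof.
move=> ud r [om [c ->]]; apply: sumr_ge0 => x _; apply: sumr_ge0 => y _.
by apply: mulr_ge0; [exact: (coupling_ge0 c (x, y))|case/andP: (ud x y)].
Qed.

Lemma DSet_ub (tau d : S -> S -> R) (u v : S) : unit_valued d -> forall r, DSet tau d u v r -> r <= 1.
Proof.
move=> ud r [om [c ->]]; rewrite -(coupling_sum1 c).
apply: ler_sum => x _; apply: ler_sum => y _.
rewrite -[X in _ <= X]mulr1; apply: ler_wpM2l; first exact: (coupling_ge0 c (x, y)).
by case/andP: (ud x y).
Qed.

Lemma DSet_ne (tau d : S -> S -> R) (u v : S) : is_trans tau -> DSet tau d u v !=set0.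
Proof.
move=> ht; exists (\sum_x \sum_y (tau u x * tau v y) * d x y).
by exists (fun p => tau u p.1 * tau v p.2); split => //; exact: prod_coupling.
Qed.

Lemma Delta_le (tau d : S -> S -> R) (u v : S) (omega : S * S -> R) : unit_valued d -> ell u = ell v ->
  coupling (tau u) (tau v) omega ->
  Delta ell tau d u v <= \sum_x \sum_y omega (x, y) * d x y.
Proof.
move=> ud e c; rewrite /Delta e eqxx /=.
apply: (ge_inf (E := DSet tau d u v)); first by exists 0; exact: DSet_lb.
by exists omega.
Qed.

Lemma Delta_unit (tau d : S -> S -> R) : is_trans tau -> unit_valued d -> unit_valued (Delta ell tau d).
Proof.
move=> ht ud u v; rewrite /Delta; case: ifP => _; first by rewrite ler01 lexx.
apply/andP; split.
  by apply: lb_le_inf; [exact: DSet_ne|exact: DSet_lb].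
have [r Dr] := DSet_ne d u v ht.
apply: le_trans (DSet_ub ud Dr).
by apply: (ge_inf (E := DSet tau d u v)) => //; exists 0; exact: DSet_lb.
Qed.

Lemma Delta_mono (tau d1 d2 : S -> S -> R) : is_trans tau -> unit_valued d1 ->
  (forall u v, d1 u v <= d2 u v) -> forall u v, Delta ell tau d1 u v <= Delta ell tau d2 u v.
Proof.
move=> ht ud le u v; rewrite /Delta; case: ifP => // _.
apply: lb_le_inf; first exact: DSet_ne.
move=> r [om [c ->]].
apply: (@le_trans _ _ (\sum_x \sum_y om (x, y) * d1 x y)).
  apply: (ge_inf (E := DSet tau d1 u v)); first by exists 0; exact: DSet_lb.
  by exists om.
apply: ler_sum => x _; apply: ler_sum => y _.
by apply: ler_wpM2l; [exact: (coupling_ge0 c (x, y))|exact: le].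
Qed.

Definition Pre (tau g : S -> S -> R) :=
  unit_valued g /\ forall u v, Delta ell tau g u v <= g u v.

Lemma lfp_le (tau d g : S -> S -> R) : is_trans tau -> is_bisim_dist ell tau d ->
  Pre tau g -> forall u v, d u v <= g u v.
Proof.
move=> ht [ud fd dmin] Pg.
pose E u v := [set r | exists g, Pre tau g /\ r = g u v].
pose m u v := inf (E u v).
have Pre1 : Pre tau (fun _ _ => 1).
  have u1 : unit_valued (fun _ _ : S => (1 : R)) by move=> ? ?; rewrite ler01 lexx.
  split => // u v; by case/andP: (Delta_unit ht u1 u v).
have Ene u v : E u v !=set0 by exists 1, (fun _ _ => 1).
have Elb u v : lbound (E u v) 0 by move=> r [h [[uh _] ->]]; case/andP: (uh u v).
have Ehl u v : has_lbound (E u v) by exists 0.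
have mg h : Pre tau h -> forall u v, m u v <= h u v.
  by move=> Ph u v; apply: ge_inf => //; exists h.
have um : unit_valued m.
  move=> u v; apply/andP; split; first exact: lb_le_inf.
  exact: (mg _ Pre1).
have Dm : forall u v, Delta ell tau m u v <= m u v.
  move=> u v; apply: lb_le_inf => // r [h [Ph ->]].
  apply: le_trans (Delta_mono ht um (mg _ Ph) u v) _.
  by case: Ph => _; apply.
have PDm : Pre tau (Delta ell tau m).
  split; first exact: Delta_unit.
  by apply: Delta_mono => //; exact: Delta_unit.
have fm : Delta ell tau m = m.
  apply/funext => u; apply/funext => v; apply/eqP; rewrite eq_le Dm /=.
  exact: mg.
move=> u v; apply: le_trans (mg _ Pg u v).
exact: dmin.
Qed.

Lemma le_sum_term (F : S -> R) i : (forall j, 0 <= F j) -> F i <= \sum_j F j.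
Proof.
move=> F0; rewrite (bigD1 i) //= lerDl; exact: sumr_ge0.
Qed.

Lemma perturb (mu nu mu' nu' : S -> R) (om : S * S -> R) (g : S -> S -> R) :
  is_distr mu' -> is_distr nu' -> coupling mu nu om -> unit_valued g ->
  exists om', coupling mu' nu' om' /\
   \sum_x \sum_y om' (x, y) * g x y <= \sum_x \sum_y om (x, y) * g x y
      + (\sum_x `|mu x - mu' x| + \sum_y `|nu y - nu' y|).
Proof.
move=> [mu'0 mu'1] [nu'0 nu'1] c ug.
have [[om0 om1] [omr omc]] := c.
have mu0 x : 0 <= mu x by rewrite -omr; apply: sumr_ge0 => y _; exact: om0.
have nu0 y : 0 <= nu y by rewrite -omc; apply: sumr_ge0 => x _; exact: om0.
have g0 x y : 0 <= g x y by case/andP: (ug x y).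
have g1 x y : g x y <= 1 by case/andP: (ug x y).
pose a x := Num.min (mu x) (mu' x) / mu x.
pose b y := Num.min (nu y) (nu' y) / nu y.
have gen (m m' : S -> R) : (forall x, 0 <= m x) -> (forall x, 0 <= m' x) ->
   forall x, [/\ 0 <= Num.min (m x) (m' x) / m x, Num.min (m x) (m' x) / m x <= 1
        & m x * (Num.min (m x) (m' x) / m x) = Num.min (m x) (m' x)].
  move=> m0 m'0 x; have [->|nz] := eqVneq (m x) 0.
    by rewrite invr0 mulr0 mul0r min_l // lexx ler01.
  have mp : 0 < m x by rewrite lt_def nz m0.
  split.
  - by apply: divr_ge0 => //; rewrite le_min m0 m'0.
  - by rewrite ler_pdivrMr // mul1r ge_min lexx.
  - by rewrite mulrC divfK.
have [a0 a1 amu] : [/\ forall x, 0 <= a x, forall x, a x <= 1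
    & forall x, mu x * a x = Num.min (mu x) (mu' x)].
  by split=> x; case: (gen mu mu' mu0 mu'0 x).
have [b0 b1 bnu] : [/\ forall x, 0 <= b x, forall x, b x <= 1
    & forall x, nu x * b x = Num.min (nu x) (nu' x)].
  by split=> x; case: (gen nu nu' nu0 nu'0 x).
pose o0 x y := om (x, y) * a x * b y.
have o00 x y : 0 <= o0 x y by apply: mulr_ge0; [apply: mulr_ge0|].
have o0le x y : o0 x y <= om (x, y).
  rewrite /o0 -mulrA -[X in _ <= X]mulr1; apply: ler_wpM2l => //.
  by rewrite -[1]mulr1 ler_pM.
pose rho1 x := mu' x - \sum_y o0 x y.
pose rho2 y := nu' y - \sum_x o0 x y.
have rho10 x : 0 <= rho1 x.
  rewrite subr_ge0; apply: (@le_trans _ _ (mu x * a x)).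
    rewrite -omr big_distrl /=; apply: ler_sum => y _.
    rewrite /o0 -[X in _ <= X]mulr1 ler_wpM2l //; exact: mulr_ge0.
  by rewrite amu ge_min lexx orbT.
have rho20 y : 0 <= rho2 y.
  rewrite subr_ge0; apply: (@le_trans _ _ (nu y * b y)).
    rewrite -omc big_distrl /=; apply: ler_sum => x _.
    rewrite /o0 -mulrA ler_wpM2l // -[X in _ <= X]mul1r; apply: ler_wpM2r => //.
  by rewrite bnu ge_min lexx orbT.
pose M := 1 - \sum_x \sum_y o0 x y.
have s1 : \sum_x rho1 x = M by rewrite /rho1 sumrB mu'1.
have s2 : \sum_y rho2 y = M by rewrite /rho2 sumrB nu'1 exchange_big.
have M0 : 0 <= M by rewrite -s1; apply: sumr_ge0.
have r1M x : rho1 x * M / M = rho1 x.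
  have [M0'|nz] := eqVneq M 0; last by rewrite mulfK.
  have : rho1 x <= 0 by rewrite -M0' -s1; apply: le_sum_term.
  move=> h; have e : rho1 x = 0 by apply/eqP; rewrite eq_le h rho10.
  by rewrite e !mul0r.
have r2M y : rho2 y * M / M = rho2 y.
  have [M0'|nz] := eqVneq M 0; last by rewrite mulfK.
  have : rho2 y <= 0 by rewrite -M0' -s2; apply: le_sum_term.
  move=> h; have e : rho2 y = 0 by apply/eqP; rewrite eq_le h rho20.
  by rewrite e !mul0r.
pose om' (p : S * S) := o0 p.1 p.2 + rho1 p.1 * rho2 p.2 / M.
have rowE x : \sum_y om' (x, y) = mu' x.
  rewrite big_split /=.
  have -> : \sum_y rho1 x * rho2 y / M = rho1 x * M / M.
    by rewrite -s2 big_distrr /= big_distrl.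
  by rewrite r1M /rho1 addrC subrK.
have colE y : \sum_x om' (x, y) = nu' y.
  rewrite big_split /=.
  have -> : \sum_x rho1 x * rho2 y / M = rho2 y * M / M.
    rewrite -s1 big_distrr /= big_distrl /=; apply: eq_bigr => x _.
    by rewrite (mulrC (rho1 x)).
  by rewrite r2M /rho2 addrC subrK.
exists om'; split.
  split; [split|split] => //.
  - move=> [x y] /=; apply: addr_ge0 => //; apply: divr_ge0 => //.
    exact: mulr_ge0.
  - by rewrite sum_pair; under eq_bigr do rewrite rowE.
have eM : \sum_x \sum_y (om (x, y) - o0 x y) = M.
  rewrite /M -(coupling_sum1 c); under eq_bigr do rewrite sumrB.
  by rewrite sumrB.
have Mle : M <= \sum_x `|mu x - mu' x| + \sum_y `|nu y - nu' y|.
  rewrite -eM.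
  apply: (@le_trans _ _ (\sum_x \sum_y (om (x, y) * (1 - a x) + om (x, y) * (1 - b y)))).
    apply: ler_sum => x _; apply: ler_sum => y _.
    rewrite /o0; move: (om0 (x, y)) (a0 x) (a1 x) (b0 y) (b1 y).
    move: (om (x, y)) (a x) (b y) => w A B w0 A0 A1 B0 B1.
    have h : 0 <= w * ((1 - A) * (1 - B)).
      by apply: mulr_ge0 => //; apply: mulr_ge0; rewrite subr_ge0.
    nra.
  under eq_bigr do rewrite big_split /=.
  rewrite big_split /= [X in _ + X <= _]exchange_big /=.
  apply: lerD.
    apply: ler_sum => x _; rewrite -big_distrl /= omr mulrBr mulr1 amu.
    rewrite /Num.min; case: ifP => _; first by rewrite subrr.
    by rewrite ler_norm.
  apply: ler_sum => y _; rewrite -big_distrl /= omc mulrBr mulr1 bnu.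
  rewrite /Num.min; case: ifP => _; first by rewrite subrr.
  by rewrite ler_norm.
have eR : \sum_x \sum_y rho1 x * rho2 y / M = M.
  rewrite -[RHS]s1; apply: eq_bigr => x _.
  by rewrite -[RHS]r1M -s2 big_distrr /= big_distrl.
apply: (@le_trans _ _ (\sum_x \sum_y (om (x, y) * g x y + rho1 x * rho2 y / M))).
  apply: ler_sum => x _; apply: ler_sum => y _; rewrite /om' /= mulrDl; apply: lerD.
    exact: ler_wpM2r.
  rewrite -[X in _ <= X]mulr1 ler_wpM2l //.
  by apply: divr_ge0 => //; exact: mulr_ge0.
under eq_bigr do rewrite big_split /=.
by rewrite big_split /= eR lerD2l.
Qed.

Lemma diag_coupling (mu : S -> R) : is_distr mu ->
  coupling mu mu (fun p => if p.1 == p.2 then mu p.1 else 0).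
Proof.
move=> [m0 m1].
have row x : \sum_y (if x == y then mu x else 0) = mu x.
  by rewrite (bigD1 x) //= eqxx big1 ?addr0 // => y /negPf; rewrite eq_sym => ->.
have col x : \sum_y (if y == x then mu y else 0) = mu x.
  rewrite (bigD1 x) //= eqxx big1 ?addr0 // => y /negPf ->.
  by [].
split; [split|split] => //=.
- by move=> p; case: ifP.
- by rewrite sum_pair /=; under eq_bigr do rewrite row.
Qed.

Lemma policy_distr (tau : S -> S -> R) (P : S * S -> S * S -> R) :
  is_policy ell tau P -> forall p, is_distr (P p).
Proof.
move=> [h1 h2] p; case: (boolP (ell p.1 != ell p.2)) => h.
  have e := h2 p h; split; first by move=> q; rewrite e; case: ifP => //; rewrite ler01.
  rewrite (bigD1 p) //= e eqxx big1 ?addr0 // => q /negPf nq.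
  by rewrite e nq.
have c : coupling (tau p.1) (tau p.2) (P p).
  apply: h1; case: (pselect (p.1 = p.2)) => e; first by left.
  right; case => [//|]; rewrite /S2_1 /= => h'; by rewrite h' in h.
by case: c.
Qed.

Section Reach.
Variables (tau : S -> S -> R) (P : S * S -> S * S -> R).
Hypothesis hP : is_policy ell tau P.
Local Notation r := (reach_within P (@S2_Delta S)).

Lemma r_diag k p : p.1 = p.2 -> r k p = 1.
Proof.
move=> e; have T : `[< S2_Delta p >] by apply/asboolP.
by case: k => [|k] /=; rewrite T.
Qed.

Lemma r_step k p : p.1 <> p.2 -> r k.+1 p = \sum_q P p q * r k q.
Proof.
move=> ne; have T : `[< S2_Delta p >] = false by apply/asboolP.
by rewrite /= T.
Qed.

Lemma r01 k p : 0 <= r k p <= 1.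
Proof.
elim: k p => [|k IH] p.
  by rewrite /=; case: ifP; rewrite ?lexx ?ler01.
case: (pselect (p.1 = p.2)) => e; first by rewrite r_diag // ler01 lexx.
have [d0 d1] := policy_distr hP p.
rewrite r_step //; apply/andP; split.
  by apply: sumr_ge0 => q _; apply: mulr_ge0 => //; case/andP: (IH q).
rewrite -d1; apply: ler_sum => q _; rewrite -[X in _ <= X]mulr1.
by apply: ler_wpM2l => //; case/andP: (IH q).
Qed.

Lemma r_S21 k p : ell p.1 != ell p.2 -> r k p = 0.
Proof.
move=> h; have ne : p.1 <> p.2 by move=> e; move: h; rewrite e eqxx.
have T : `[< S2_Delta p >] = false by apply/asboolP.
elim: k => [|k IH]; first by rewrite /= T.
rewrite r_step // (bigD1 p) //= big1 ?addr0.
  by case: hP => _ /(_ p h p) ->; rewrite eqxx mul1r.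
by move=> q /negPf nq; case: hP => _ /(_ p h q) ->; rewrite nq mul0r.
Qed.

Lemma f_step k p : p.1 <> p.2 ->
  1 - r k.+1 p = \sum_q P p q * (1 - r k q).
Proof.
move=> ne; have [_ d1] := policy_distr hP p.
rewrite r_step //; under [RHS]eq_bigr do rewrite mulrBr mulr1.
by rewrite sumrB d1.
Qed.
End Reach.

Fixpoint Gf (f : nat -> S * S -> R) (eta : R) (k : nat) (p : S * S) : R :=
  match k with
  | 0%N => f 0%N p
  | k'.+1 => Num.min (Gf f eta k' p) (f k p + k%:R * eta)
  end.

Lemma G_le f eta k j p : (j <= k)%N -> Gf f eta k p <= f j p + j%:R * eta.
Proof.
elim: k => [|k IH] hj.
  by move: hj; rewrite leqn0 => /eqP -> /=; rewrite mul0r addr0.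
rewrite /= ge_min; move: hj; rewrite leq_eqVlt => /orP[/eqP ->|hj].
  by rewrite lexx orbT.
by rewrite IH.
Qed.

Lemma le_G f eta k p x : (forall j, (j <= k)%N -> x <= f j p + j%:R * eta) ->
  x <= Gf f eta k p.
Proof.
elim: k => [|k IH] h /=.
  by have := h 0%N (leqnn 0); rewrite mul0r addr0.
rewrite le_min h // andbT; apply: IH => j hj; apply: h.
exact: leqW.
Qed.
Lemma key (tau tau' : S -> S -> R) (P : S * S -> S * S -> R) (d : S -> S -> R)
  (N : nat) (s t : S) :
  is_trans tau -> is_trans tau' -> is_policy ell tau P -> is_bisim_dist ell tau' d ->
  d s t <= (1 - reach_within P (@S2_Delta S) N (s, t))
     + N%:R * (2 * \sum_u \sum_x `|tau u x - tau' u x|).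
Proof.
move=> ht ht' hP hd.
set eta := 2 * _.
pose f k p := 1 - reach_within P (@S2_Delta S) k p.
have f01 k p : 0 <= f k p <= 1.
  by rewrite /f subr_ge0 lerBlDr lerDl; case/andP: (r01 hP k p) => -> ->.
have eta0 : 0 <= eta.
  by rewrite mulr_ge0 //; apply: sumr_ge0 => u _; apply: sumr_ge0.
have fj0 j p : 0 <= f j p + j%:R * eta.
  by apply: addr_ge0; [case/andP: (f01 j p)|exact: mulr_ge0].
pose g u v := Gf f eta N (u, v).
suff Pg : Pre tau' g.
  apply: le_trans (lfp_le ht' hd Pg s t) _.
  exact: G_le.
have ug : unit_valued g.
  move=> u v; apply/andP; split; first exact: le_G.
  rewrite /g; apply: le_trans (G_le f eta (u, v) (leq0n N)) _.
  by rewrite mul0r addr0; case/andP: (f01 0%N (u, v)).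
split => // u v.
have Dle1 : Delta ell tau' g u v <= 1 by case/andP: (Delta_unit ht' ug u v).
case: (boolP (ell u != ell v)) => hl.
  rewrite {1}/Delta hl; apply: le_G => j _.
  rewrite /f (r_S21 hP) //= subr0 lerDl; exact: mulr_ge0.
have el : ell u = ell v by apply/eqP; rewrite -[_ == _]negbK hl.
case: (eqVneq u v) => [<-|nuv].
  apply: le_trans (Delta_le (tau := tau') (u := u) (v := u) ug (erefl _) (diag_coupling (ht' u))) _.
  apply: (@le_trans _ _ 0); last by case/andP: (ug u u).
  apply: sumr_le0 => x _; apply: sumr_le0 => y _ /=; case: eqP => [<-|_].
    apply: mulr_ge0_le0; first by case: (ht' u) => ->.
    rewrite /g; apply: le_trans (G_le f eta (x, x) (leq0n N)) _.
    by rewrite mul0r addr0 /f r_diag // subrr.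
  by rewrite mul0r.
have ne : (u, v).1 <> (u, v).2 by move/eqP; rewrite (negPf nuv).
have c : coupling (tau u) (tau v) (P (u, v)).
  case: hP => h1 _; apply: (h1 (u, v)); right.
  by case => [/= e|]; [move/eqP: nuv|rewrite /S2_1 /= => h'; rewrite h' in hl].
have [om' [c' le']] := perturb (ht' u) (ht' v) c ug.
apply: le_G => -[_|i hi].
  by rewrite /f /= ifF ?subr0 ?mul0r ?addr0 //; apply/asboolP.
apply: le_trans (Delta_le ug el c') _.
apply: le_trans le' _.
have Deta : \sum_x `|tau u x - tau' u x| + \sum_y `|tau v y - tau' v y| <= eta.
  rewrite /eta mulr2n mulrDl mul1r; apply: lerD.
  - by apply: (le_sum_term (F := fun u => \sum_x `|tau u x - tau' u x|)) => w; apply: sumr_ge0.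
  - by apply: (le_sum_term (F := fun u => \sum_x `|tau u x - tau' u x|)) => w; apply: sumr_ge0.
apply: (@le_trans _ _ (\sum_x \sum_y P (u, v) (x, y) * (f i (x, y) + i%:R * eta) + eta)).
  apply: lerD => //; apply: ler_sum => x _; apply: ler_sum => y _.
  apply: ler_wpM2l; first exact: (coupling_ge0 c (x, y)).
  exact: (G_le f eta (x, y) (ltnW hi)).
rewrite -(sum_pair (fun q => P (u, v) q * (f i q + i%:R * eta))); under eq_bigr do rewrite mulrDr.
rewrite big_split /= -big_distrl /=.
have [_ d1] := policy_distr hP (u, v).
rewrite d1 mul1r /f (f_step hP) // -natr1 mulrDl mul1r addrA.
by [].
Qed.
End Aux.

Unset Implicit Arguments. Set Strict Implicit.
Theorem theorem1 (R : realType) (S : finType) (L : eqType) (ell : S -> L)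
  (tau : S -> S -> R) (s t : S) :
  is_trans tau ->
  (exists s1 s2 : S, ell s1 != ell s2) ->
  robust_bisim ell tau s t ->
  forall (taun : nat -> S -> S -> R) (dn : nat -> S -> S -> R),
    (forall n, is_trans (taun n)) ->
    (fun n : nat => dF (taun n) tau) @ \oo --> (0 : R) ->
    (forall n, is_bisim_dist ell (taun n) (dn n)) ->
    (fun n : nat => dn n s t) @ \oo --> (0 : R).
Proof.
move=> ht _ [P [hP hreach]] taun dn htn hdF hdn.
apply/cvgrPdist_le => e e0.
have e20 : 0 < e / 2 by rewrite divr_gt0.
move/cvgrPdist_le: hreach => /(_ _ e20) [M _ hM].
have hN := hM M (leqnn M).
set N := M in hN.
pose K : R := N%:R * (2 * \sum_(u : S) \sum_(x : S) (1 : R)).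
have K0 : 0 <= K.
  by rewrite mulr_ge0 // mulr_ge0 //; apply: sumr_ge0 => u _; apply: sumr_ge0.
pose del := e / (2 * (K + 1)).
have del0 : 0 < del by rewrite divr_gt0 // mulr_gt0 // ltr_wpDl.
move/cvgrPdist_le: hdF => /(_ _ del0) hdF.
near=> n.
have hd : `|0 - dF (taun n) tau| <= del by near: n.
have dF_le : dF (taun n) tau <= del.
  by move: hd; rewrite sub0r normrN; apply: le_trans; exact: ler_norm.
have := @key _ _ _ ell tau (taun n) P (dn n) N s t ht (htn n) hP (hdn n).
move=> hk.
have dn0 : 0 <= dn n s t by case: (hdn n) => /(_ s t) /andP[].
rewrite sub0r normrN ger0_norm //.
apply: le_trans hk _.
have h1 : 1 - reach_within P (@S2_Delta S) N (s, t) <= e / 2.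
  by apply: le_trans (ler_norm _) hN.
have h2 : N%:R * (2 * \sum_u \sum_x `|tau u x - taun n u x|) <= K * del.
  rewrite /K -!mulrA; apply: ler_wpM2l => //; apply: ler_wpM2l => //.
  rewrite big_distrl /=; apply: ler_sum => u _; rewrite big_distrl /=.
  apply: ler_sum => x _; rewrite mul1r distrC.
  by apply: le_trans (dF_ge _ _ _ _) dF_le.
have h3 : K * del <= e / 2.
  rewrite /del mulrA ler_pdivrMr; last by rewrite mulr_gt0 // ltr_wpDl.
  have -> : e / 2 * (2 * (K + 1)) = e * (K + 1) by field.
  by rewrite mulrDr mulr1 mulrC lerDl; exact: ltW.
lra.
Unshelve. all: end_near.
Qed.
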